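(* Let $A\in\mathbb{C}^{m\times n}$, $B\in\mathbb{C}^{n\times p}$, $C\in\mathbb{C}^{p\times q}$ and $M=ABC$. For any $(AB)^{(1)}\in\{(AB)^{(1)}\}$ and $(BC)^{(1)}\in\{(BC)^{(1)}\}$, put $P=I_p-(AB)^{(1)}AB$ and $Q=I_n-BC(BC)^{(1)}$. Then for every $\{1\}$-generalized inverse $(QBP)^{(1)}$ of $QBP$, the matrix $$X=(BC)^{(1)}B(AB)^{(1)}-(BC)^{(1)}BP(QBP)^{(1)}QB(AB)^{(1)}$$ satisfies $MXM=M$.
   Context: For $X\in\mathbb{C}^{p\times q}$, a matrix $G\in\mathbb{C}^{q\times p}$ is called a $\{1\}$-generalized inverse of $X$ (written $X^{(1)}$) if $XGX=X$; $\{X^{(1)}\}$ denotes the set of all such $G$. $I_k$ is the $k\times k$ identity matrix. *)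

(* Defs.v *)
From HB Require Import structures.
From mathcomp Require Import all_boot all_order all_algebra.
Set Implicit Arguments. Unset Strict Implicit. Unset Printing Implicit Defensive.
Import GRing.Theory.
Local Open Scope ring_scope.

Definition is_g1inv (R : ringType) (p q : nat) (X : 'M[R]_(p, q)) (G : 'M[R]_(q, p)) : Prop :=
  X *m G *m X = X.

(* Main.v *)
Require Import Defs.
From HB Require Import structures.
From mathcomp Require Import all_boot all_order all_algebra.
Local Open Scope ring_scope.
Import GRing.Theory.

Theorem theorem3p4 (F : fieldType) (m n p q : nat)
  (A : 'M[F]_(m, n)) (B : 'M[F]_(n, p)) (C : 'M[F]_(p, q))
  (ABi : 'M[F]_(p, m)) (BCi : 'M[F]_(q, n))
  (hAB : is_g1inv (A *m B) ABi) (hBC : is_g1inv (B *m C) BCi)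
  (QBPi : 'M[F]_(p, n))
  (hQBP : is_g1inv ((1%:M - B *m C *m BCi) *m B *m (1%:M - ABi *m (A *m B))) QBPi) :
  let M := A *m B *m C in
  let P := (1%:M - ABi *m (A *m B) : 'M[F]_p) in
  let Q := (1%:M - B *m C *m BCi : 'M[F]_n) in
  let X := BCi *m B *m ABi - BCi *m B *m P *m QBPi *m Q *m B *m ABi in
  M *m X *m M = M.
Proof.
move=> M P Q X.
rewrite /is_g1inv -/P -/Q in hQBP; rewrite /is_g1inv in hAB hBC.
rewrite ?mulmxA in hAB hBC hQBP.
have hABP : A *m B *m P = 0.
  by rewrite /P mulmxBr mulmx1 ?mulmxA hAB subrr.
have hQBC : Q *m B *m C = 0.
  by rewrite /Q !mulmxBl !mul1mx ?mulmxA hBC subrr.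
have hq : B *m C *m BCi *m B = B - Q *m B.
  by rewrite /Q mulmxBl mul1mx opprB addrC subrK.
have hp : ABi *m (A *m B) = 1%:M - P.
  by rewrite /P opprB addrC subrK.
rewrite /X /M; clear X M; clearbody P Q.
have hQBC' : A *m Q *m B *m C = 0.
  by rewrite -2!mulmxA (mulmxA Q) hQBC mulmx0.
have T1 : A *m B *m C *m (BCi *m B *m ABi) *m (A *m B *m C)
   = A *m B *m C + A *m (Q *m B *m P) *m C.
  have -> : A *m B *m C *m (BCi *m B *m ABi) *m (A *m B *m C)
      = A *m (B *m C *m BCi *m B) *m (ABi *m (A *m B)) *m C.
    by rewrite ?mulmxA.
  rewrite hq hp !mulmxBr !mulmxBl !mulmx1 ?mulmxA hQBC' hABP mul0mx.
  by rewrite ?mulmxA !subr0 ?sub0r ?opprK.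
have T2 : A *m B *m C *m (BCi *m B *m P *m QBPi *m Q *m B *m ABi) *m (A *m B *m C)
   = A *m (Q *m B *m P) *m C.
  have -> : A *m B *m C *m (BCi *m B *m P *m QBPi *m Q *m B *m ABi) *m (A *m B *m C)
      = (A *m (B *m C *m BCi *m B) *m P) *m QBPi *m (Q *m B *m (ABi *m (A *m B)) *m C).
    by rewrite ?mulmxA.
  rewrite hq hp !mulmxBr !mulmxBl mulmx1 ?mulmxA hQBC hABP.
  have hW : A *m (Q *m B *m P *m QBPi *m Q *m B *m P) *m C = A *m (Q *m B *m P) *m C.
    by rewrite hQBP.
  rewrite ?mulmxA in hW.
  by rewrite !mul0mx !sub0r mulmxN ?mulmxA opprK hW.
rewrite mulmxBr mulmxBl T1 T2 addrK.
done.
Qed.
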